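(* Let $K$ be an algebraically closed valued field and $L$ a valued field extension of $K$ of transcendence degree $1$. Let $c,d\in L\setminus K$. Then $E(c/K)=E(d/K)$.
   Context: For $c\in L$, $T(c/K)=\{\mathrm{val}(c-b): b\in K\}$, and $E(c/K)=\{e\in\mathrm{val}(K): e+T(c/K)=T(c/K)\}$ is the stabilizer of $T(c/K)$ in the value group of $K$. *)

(* Defs.v *)
From HB Require Import structures.
From mathcomp Require Import all_boot all_order all_algebra.
Set Implicit Arguments. Unset Strict Implicit. Unset Printing Implicit Defensive.
Import GRing.Theory.
Local Open Scope ring_scope.

Record ordered_abgroup (G : zmodType) := OrderedAbGroup {
  og_le : G -> G -> Prop;
  og_refl : forall x, og_le x x;
  og_antisym : forall x y, og_le x y -> og_le y x -> x = y;
  og_trans : forall x y z, og_le x y -> og_le y z -> og_le x z;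
  og_total : forall x y, og_le x y \/ og_le y x;
  og_addl : forall x y z, og_le x y -> og_le (z + x) (z + y)
}.

(* G u {oo}, with None = oo. *)
Definition ole (G : zmodType) (O : ordered_abgroup G) (a b : option G) : Prop :=
  match a, b with
  | _, None => True
  | None, Some _ => False
  | Some x, Some y => og_le O x y
  end.

Definition oadd (G : zmodType) (a b : option G) : option G :=
  match a, b with
  | Some x, Some y => Some (x + y)
  | _, _ => None
  end.

Definition is_valuation (F : fieldType) (G : zmodType) (O : ordered_abgroup G)
    (v : F -> option G) : Prop :=
  [/\ forall x, v x = None <-> x = 0,
      forall x y, v (x * y) = oadd (v x) (v y)
    & forall x y, ole O (v x) (v (x + y)) \/ ole O (v y) (v (x + y))].

Definition transcendental_over (K L : fieldType) (iota : {rmorphism K -> L}) (t : L) :=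
  forall p : {poly K}, p != 0 -> (map_poly iota p).[t] != 0.

(* x in L is algebraic over K(t): some nonzero polynomial in Y with coefficients
   in K[t] (denominators cleared) vanishes at x. *)
Definition algebraic_over_Kt (K L : fieldType) (iota : {rmorphism K -> L}) (t x : L) :=
  exists P : {poly {poly K}}, P != 0 /\
    (map_poly (fun q : {poly K} => (map_poly iota q).[t]) P).[x] = 0.

(* L has transcendence degree 1 over K: {t} is a transcendence basis for some t. *)
Definition trdeg1 (K L : fieldType) (iota : {rmorphism K -> L}) :=
  exists t : L, transcendental_over iota t /\ forall x : L, algebraic_over_Kt iota t x.

Definition Tset (K L : fieldType) (iota : {rmorphism K -> L}) (G : zmodType)
    (v : L -> option G) (c : L) (g : option G) : Prop :=
  exists b : K, g = v (c - iota b).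

Definition Eset (K L : fieldType) (iota : {rmorphism K -> L}) (G : zmodType)
    (v : L -> option G) (c : L) (e : G) : Prop :=
  (exists a : K, a != 0 /\ v (iota a) = Some e) /\
  (forall g : option G, Tset iota v c g <-> exists h, Tset iota v c h /\ g = oadd (Some e) h).

(* Main.v *)
Require Import Defs.
From mathcomp Require Import all_boot all_order all_algebra polyXY.
From Stdlib Require Import Classical.
From mathcomp Require Import ring.
Set Implicit Arguments. Unset Strict Implicit. Unset Printing Implicit Defensive.
Import GRing.Theory.
Local Open Scope ring_scope.

Section OG.
Variables (G : zmodType) (O : ordered_abgroup G).
Local Notation le := (og_le O).

Lemma le_refl' x : le x x. Proof. exact: og_refl. Qed.
Lemma le_trans' x y z : le x y -> le y z -> le x z. Proof. exact: og_trans. Qed.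
Lemma le_addr' x y z : le x y -> le (x + z) (y + z).
Proof. by move=> h; rewrite ![_ + z]addrC; apply: og_addl. Qed.
Lemma le_add2 a b c d : le a b -> le c d -> le (a + c) (b + d).
Proof.
move=> h1 h2; apply: (le_trans' (y := b + c)); first exact: le_addr'.
exact: og_addl.
Qed.
Lemma le_cancr x y z : le (x + z) (y + z) -> le x y.
Proof. by move=> h; have := le_addr' (- z) h; rewrite !addrK. Qed.
Lemma le_addpos x p : le 0 p -> le x (x + p).
Proof. by move=> h; have := og_addl x h; rewrite addr0. Qed.
Lemma le_oppsub x y : le x y -> le 0 (y - x).
Proof. by move=> h; have := le_addr' (- x) h; rewrite subrr. Qed.
Lemma le_subsub x y : le 0 (y - x) -> le x y.
Proof. by move=> h; have := le_addr' x h; rewrite add0r subrK. Qed.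
Lemma le_muln e n : le 0 e -> le 0 (e *+ n).
Proof.
move=> he; elim: n => [|n IH]; first by rewrite mulr0n; apply: og_refl.
by rewrite mulrS; have := le_add2 he IH; rewrite addr0.
Qed.
Lemma le_posmul e n : le 0 e -> le e (e *+ n.+1).
Proof. by move=> he; rewrite mulrS; apply: le_addpos; apply: le_muln. Qed.
Lemma not_le_mul e n k : le 0 e -> e != 0 -> (n < k)%N -> ~ le (e *+ k) (e *+ n).
Proof.
move=> he ne nk h.
have hk : k = (n + (k - n).-1.+1)%N by rewrite prednK ?subn_gt0 // subnKC // ltnW.
rewrite hk mulrnDr in h.
have h2 : le (e *+ (k - n).-1.+1) 0.
  by apply: (le_cancr (z := e *+ n)); rewrite add0r addrC.
have : le e 0 := le_trans' (le_posmul _ he) h2.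
by move=> h3; move: ne; rewrite (og_antisym h3 he) eqxx.
Qed.
Lemma le_total' (x y : G) : le x y \/ le y x. Proof. exact: og_total. Qed.
Lemma twice0 (g : G) : g + g = 0 -> g = 0.
Proof.
move=> h; case: (og_total O 0 g) => hg.
  by apply: (og_antisym _ hg); have := le_addpos g hg; rewrite h.
by apply: (og_antisym hg); have := og_addl g hg; rewrite h addr0.
Qed.
End OG.

Section Val.
Variables (L : fieldType) (G : zmodType) (O : ordered_abgroup G) (v : L -> option G).
Hypothesis hv : is_valuation O v.
Local Notation le := (og_le O).

Definition vv (x : L) : G := if v x is Some g then g else 0.
Definition LB (x : L) (g : G) : Prop := ole O (Some g) (v x).

Lemma v_eq0 x : v x = None <-> x = 0. Proof. by case: hv. Qed.
Lemma vM x y : v (x * y) = oadd (v x) (v y). Proof. by case: hv. Qed.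
Lemma vS x : x != 0 -> v x = Some (vv x).
Proof.
move=> nz; rewrite /vv; case E: (v x) => [g|] //.
by move/v_eq0: E => E; rewrite E eqxx in nz.
Qed.
Lemma vvM x y : x != 0 -> y != 0 -> vv (x * y) = vv x + vv y.
Proof. by move=> hx hy; rewrite {1}/vv vM (vS hx) (vS hy). Qed.
Lemma vv1 : vv 1 = 0.
Proof.
have := vvM (oner_neq0 L) (oner_neq0 L); rewrite mulr1 => h.
by apply: (addrI (vv 1)); rewrite addr0 -h.
Qed.
Lemma vvN1 : vv (-1) = 0.
Proof.
have n1 : (-1 : L) != 0 by rewrite oppr_eq0 oner_neq0.
have := vvM n1 n1; rewrite mulrNN mulr1 vv1 => h.
by apply: (twice0 O); rewrite -h.
Qed.
Lemma vvN x : vv (- x) = vv x.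
Proof.
have [->|nz] := eqVneq x 0; first by rewrite oppr0.
have n1 : (-1 : L) != 0 by rewrite oppr_eq0 oner_neq0.
by rewrite -mulN1r vvM // vvN1 add0r.
Qed.
Lemma vvV x : x != 0 -> vv (x^-1) = - vv x.
Proof.
move=> nz; have := vvM (invr_neq0 nz) nz; rewrite mulVf // vv1 => h.
by apply: (addIr (vv x)); rewrite -h addNr.
Qed.
Lemma vvX x n : x != 0 -> vv (x ^+ n) = vv x *+ n.
Proof.
move=> nz; elim: n => [|n IH]; first by rewrite expr0 vv1 mulr0n.
by rewrite exprS vvM ?expf_neq0 // IH mulrS.
Qed.
Lemma LB0 g : LB 0 g.
Proof. by rewrite /LB (proj2 (v_eq0 0) erefl). Qed.
Lemma LBnz x g : x != 0 -> LB x g <-> le g (vv x).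
Proof. by move=> nz; rewrite /LB (vS nz). Qed.
Lemma LB_mono x g g' : le g g' -> LB x g' -> LB x g.
Proof.
have [->|nz] := eqVneq x 0; first by move=> *; apply: LB0.
by rewrite !LBnz // => h1 h2; apply: og_trans h1 h2.
Qed.
Lemma ultra x y : x != 0 -> y != 0 -> x + y != 0 ->
  le (vv x) (vv (x + y)) \/ le (vv y) (vv (x + y)).
Proof.
move=> hx hy hxy; case: hv => _ _ /(_ x y).
by rewrite /ole (vS hx) (vS hy) (vS hxy).
Qed.
Lemma LB_add x y g : LB x g -> LB y g -> LB (x + y) g.
Proof.
have [->|hx] := eqVneq x 0; first by rewrite add0r.
have [->|hy] := eqVneq y 0; first by rewrite addr0.
have [->|hxy] := eqVneq (x + y) 0; first by move=> *; apply: LB0.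
rewrite !LBnz // => h1 h2.
by case: (ultra hx hy hxy) => h; [apply: og_trans h1 h | apply: og_trans h2 h].
Qed.
Lemma LB_opp x g : LB x g -> LB (- x) g.
Proof.
have [->|hx] := eqVneq x 0; first by rewrite oppr0.
by rewrite !LBnz ?oppr_eq0 // vvN.
Qed.
Lemma LB_sub x y g : LB x g -> LB y g -> LB (x - y) g.
Proof. by move=> h1 h2; apply: LB_add => //; apply: LB_opp. Qed.
Lemma LB_mul x y a b : LB x a -> LB y b -> LB (x * y) (a + b).
Proof.
have [->|hx] := eqVneq x 0; first by rewrite mul0r => *; apply: LB0.
have [->|hy] := eqVneq y 0; first by rewrite mulr0 => *; apply: LB0.
rewrite !LBnz ?mulf_neq0 // vvM // => h1 h2.
exact: le_add2.
Qed.
Lemma LB_vv x : LB x (vv x).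
Proof.
have [->|hx] := eqVneq x 0; first by apply: LB0.
by rewrite LBnz //; apply: og_refl.
Qed.
Lemma LB_sum (I : Type) (r : seq I) (P : pred I) (F : I -> L) g :
  (forall i, P i -> LB (F i) g) -> LB (\sum_(i <- r | P i) F i) g.
Proof.
move=> h; elim/big_rec: _ => [|i x Pi hx]; first exact: LB0.
by apply: LB_add => //; apply: h.
Qed.
Lemma strict x y g : x != 0 -> LB y g -> le (vv x) g -> vv x <> g ->
  x + y != 0 /\ vv (x + y) = vv x.
Proof.
move=> hx hy h1 h2.
have [y0|ynz] := eqVneq y 0; first by rewrite y0 addr0.
have hyv : le g (vv y) by move/(LBnz g ynz): hy.
have hxy : x + y != 0.
  apply/eqP => e; have ey : y = - x by rewrite -(addKr x y) e addr0.
  by rewrite ey vvN in hyv; apply: h2; apply: (@og_antisym _ O).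
split=> //.
have hle : le (vv x) (vv (x + y)).
  case: (ultra hx ynz hxy) => // h; exact: og_trans h1 (og_trans hyv h).
apply: (@og_antisym _ O) => //.
have := ultra hxy (y := - y) _ _; rewrite addrK oppr_eq0 => /(_ ynz hx); case => // h.
rewrite vvN in h; exfalso; apply: h2; apply: (@og_antisym _ O) => //.
exact: og_trans hyv h.
Qed.
End Val.

Lemma stable (L : fieldType) (G : zmodType) (O : ordered_abgroup G) (v : L -> option G)
  (hv : is_valuation O v) (a a' : L) (m : G) :
  a != 0 -> LB O v (a - a') (vv v a + m) -> og_le O 0 m -> m != 0 ->
  a' != 0 /\ vv v a' = vv v a.
Proof.
move=> ha hl hm nm.
have := strict hv ha (y := a' - a) _ (le_addpos (vv v a) hm) _.
rewrite [a + _]addrC subrK; apply.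
  by rewrite -opprB; apply: LB_opp.
move=> E; move: nm; rewrite -(subrr (vv v a)) {1}E addrC addKr eqxx //.
Qed.

Lemma le_step (G : zmodType) (O : ordered_abgroup G) (lam m d : G) j :
  og_le O m d -> og_le O (lam + m - d *+ j.+1) (lam - d *+ j).
Proof.
move=> h; rewrite mulrSr opprD addrACA.
have h2 : og_le O (m - d) 0 by rewrite -(subrr d); apply: le_addr'.
by have := og_addl (lam - d *+ j) h2; rewrite addr0.
Qed.

Lemma vv_of (L : fieldType) (G : zmodType) (v : L -> option G) (x : L) (g : G) :
  v x = Some g -> vv v x = g.
Proof. by rewrite /vv => ->. Qed.
Lemma LB_of (L : fieldType) (G : zmodType) (O : ordered_abgroup G) (v : L -> option G)
  (x : L) (g g' : G) : v x = Some g' -> og_le O g g' -> LB O v x g.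
Proof. by rewrite /LB => ->. Qed.

Lemma size_map_le (aR rR : nzSemiRingType) (f : aR -> rR) (p : {poly aR}) :
  (size (map_poly f p) <= size p)%N.
Proof. by rewrite map_polyE; apply: leq_trans (size_Poly _) _; rewrite size_map. Qed.

Section Main.
Variables (K : closedFieldType) (L : fieldType) (iota : {rmorphism K -> L}).
Variables (G : zmodType) (O : ordered_abgroup G) (v : L -> option G).
Hypothesis hv : is_valuation O v.
Local Notation le := (og_le O).
Local Notation vv := (vv v).
Local Notation LB := (LB O v).
Local Notation vv1 := (vv1 hv).
Local Notation vvN1 := (vvN1 hv).
Local Notation vvM := (vvM hv).
Local Notation vvN := (vvN hv).
Local Notation vvV := (vvV hv).
Local Notation vvX := (vvX hv).
Local Notation LB0 := (LB0 hv).
Local Notation LBnz := (LBnz hv).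
Local Notation LB_mono := (LB_mono hv).
Local Notation ultra := (ultra hv).
Local Notation LB_add := (LB_add hv).
Local Notation LB_opp := (LB_opp hv).
Local Notation LB_sub := (LB_sub hv).
Local Notation LB_mul := (LB_mul hv).
Local Notation LB_vv := (LB_vv hv).
Local Notation LB_sum := (LB_sum hv).
Local Notation strict := (strict hv).

Definition notK (x : L) := forall b : K, x != iota b.
Definition Aimp (x : L) (e : G) :=
  forall b : K, exists b' : K, LB (x - iota b') (vv (x - iota b) + e).
Definition pos (e : G) := le 0 e /\ e != 0.

Lemma notK_sub (x : L) (b : K) : notK x -> x - iota b != 0.
Proof. by move=> h; rewrite subr_eq0; apply: h. Qed.
Lemma notK_shift (x : L) (b : K) : notK x -> notK (x - iota b).
Proof.
move=> h r; apply/eqP => E; move/eqP: (h (r + b)); apply.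
by rewrite rmorphD -E subrK.
Qed.
Lemma iota_neq0 (a : K) : a != 0 -> iota a != 0.
Proof. by rewrite fmorph_eq0. Qed.

Definition rts (q : {poly K}) : seq K := sval (closed_field_poly_normal q).

Lemma map_rts (q : {poly K}) : map_poly iota q =
  iota (lead_coef q) *: \prod_(r <- rts q) ('X - (iota r)%:P).
Proof.
rewrite {1}(svalP (closed_field_poly_normal q)) map_polyZ rmorph_prod /=.
by congr (_ *: _); apply: eq_bigr => r _; rewrite map_polyXsubC.
Qed.
Lemma size_rts (q : {poly K}) : q != 0 -> size q = (size (rts q)).+1.
Proof.
move=> nz; rewrite {1}(svalP (closed_field_poly_normal q)) size_scale.
  by rewrite size_prod_XsubC.
by rewrite lead_coef_eq0.
Qed.
Lemma eval_rts (q : {poly K}) (z : L) : (map_poly iota q).[z] =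
  iota (lead_coef q) * \prod_(r <- rts q) (z - iota r).
Proof.
rewrite map_rts hornerZ horner_prod; congr (_ * _).
by apply: eq_bigr => r _; rewrite hornerXsubC.
Qed.

Lemma vv_prod (s : seq K) (z : L) : (forall r, z - iota r != 0) ->
  \prod_(r <- s) (z - iota r) != 0 /\
  vv (\prod_(r <- s) (z - iota r)) = \sum_(r <- s) vv (z - iota r).
Proof.
move=> h; elim: s => [|a s [IH1 IH2]]; first by rewrite !big_nil oner_neq0 vv1.
rewrite !big_cons mulf_neq0 //; split=> //.
by rewrite vvM // IH2.
Qed.

Lemma LB_prod (I : eqType) (s : seq I) (F : I -> L) (g : I -> G) :
  (forall i, i \in s -> LB (F i) (g i)) -> LB (\prod_(i <- s) F i) (\sum_(i <- s) g i).
Proof.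
elim: s => [|a s IH] h; first by rewrite !big_nil LBnz ?oner_neq0 // vv1; apply: og_refl.
rewrite !big_cons; apply: LB_mul; first by apply: h; rewrite inE eqxx.
by apply: IH => i hi; apply: h; rewrite inE hi orbT.
Qed.

Variables (t : L) (e : G).
Hypotheses (htK : notK t) (hte : Aimp t e) (he : pos e).

Lemma best0 (S : seq K) : exists b, forall s, s \in S ->
  le (vv (t - iota s)) (vv (t - iota b)).
Proof.
elim: S => [|a S [b IH]]; first by exists 0.
case: (og_total O (vv (t - iota a)) (vv (t - iota b))) => h.
  by exists b => s; rewrite inE => /orP [/eqP ->|/IH].
exists a => s; rewrite inE => /orP [/eqP ->|/IH]; first exact: og_refl.
by move=> h2; apply: og_trans h2 h.
Qed.

Lemma best (S : seq K) k : exists b, forall s, s \in S ->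
  le (vv (t - iota s) + e *+ k) (vv (t - iota b)).
Proof.
elim: k => [|k [b IH]].
  by have [b hb] := best0 S; exists b => s hs; rewrite mulr0n addr0; apply: hb.
have [b' hb'] := hte b.
move/(LBnz _ (notK_sub b' htK)): hb' => hb'.
exists b' => s /IH h; rewrite mulrSr addrA; apply: og_trans hb'.
exact: le_addr'.
Qed.

Lemma prod_diff (S : seq K) b m : le 0 m ->
  (forall s, s \in S -> le (vv (t - iota s) + m) (vv (t - iota b))) ->
  LB (\prod_(s <- S) (t - iota s) - \prod_(s <- S) (iota b - iota s))
     (\sum_(s <- S) vv (t - iota s) + m).
Proof.
move=> hm; elim: S => [|a S IH] h; first by rewrite !big_nil subrr; apply: LB0.
rewrite !big_cons.
set X := \prod_(s <- S) _; set Y := \prod_(s <- S) _.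
have -> : (t - iota a) * X - (iota b - iota a) * Y =
  (t - iota a) * (X - Y) + (t - iota b) * Y.
  by ring.
apply: LB_add.
  rewrite -addrA; apply: LB_mul; first exact: LB_vv.
  by apply: IH => s hs; apply: h; rewrite inE hs orbT.
have ha : le (vv (t - iota a) + m) (vv (t - iota b)) by apply: h; rewrite inE eqxx.
rewrite addrAC; apply: LB_mul.
  by rewrite LBnz //; apply: notK_sub.
apply: LB_prod => s hs.
have -> : iota b - iota s = (t - iota s) - (t - iota b) by ring.
apply: LB_sub; first exact: LB_vv.
rewrite LBnz; last exact: notK_sub.
apply: og_trans (h s _); last by rewrite inE hs orbT.
exact: le_addpos.
Qed.

Definition phi (z : L) (q : {poly K}) := (map_poly iota q).[z].

Lemma approx_poly (q : {poly K}) b m : q != 0 -> le 0 m ->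
  (forall s, s \in rts q -> le (vv (t - iota s) + m) (vv (t - iota b))) ->
  phi t q != 0 /\ LB (phi t q - iota q.[b]) (vv (phi t q) + m).
Proof.
move=> qn hm h.
have hl : iota (lead_coef q) != 0 by apply: iota_neq0; rewrite lead_coef_eq0.
have [P1 P2] := vv_prod (rts q) (fun r => notK_sub r htK).
have -> : iota q.[b] = iota (lead_coef q) * \prod_(r <- rts q) (iota b - iota r).
  by rewrite -horner_map eval_rts.
rewrite /phi eval_rts mulf_neq0 //; split=> //.
rewrite -mulrBr vvM // P2 -addrA; apply: LB_mul; first exact: LB_vv.
exact: prod_diff.
Qed.

Section GB.
Variables (y : L) (hyK : notK y) (hst : forall r, le (vv (y - iota r)) (vv y + e)).

Lemma step_m (a : K) : exists m, [/\ le m (vv y), LB (iota a) m &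
  le (vv (y - iota a)) (m + e)].
Proof.
case: (classic (LB (iota a) (vv y))) => h.
  by exists (vv y); split=> //; apply: og_refl.
have ha : iota a != 0 by apply/eqP => E; apply: h; rewrite E; apply: LB0.
have h1 : ~ le (vv y) (vv (iota a)) by move=> h2; apply: h; rewrite LBnz.
have h2 : le (vv (iota a)) (vv y) by case: (og_total O (vv y) (vv (iota a))).
exists (vv (iota a)); split=> //; first exact: LB_vv.
have hne : vv (- iota a) <> vv y by rewrite vvN => E; apply: h1; rewrite E; apply: og_refl.
have hx : - iota a != 0 by rewrite oppr_eq0.
have hle : le (vv (- iota a)) (vv y) by rewrite vvN.
have [_ E] := strict hx (LB_vv y) hle hne.
rewrite addrC E vvN.
exact: le_addpos he.1.
Qed.

Lemma Gbound (c0 : L) (s : seq K) : c0 != 0 -> exists lam,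
  [/\ (forall j, LB ((c0 *: \prod_(r <- s) ('X - (iota r)%:P))`_j) (lam - vv y *+ j)),
   (c0 *: \prod_(r <- s) ('X - (iota r)%:P)).[y] != 0 &
   le (vv ((c0 *: \prod_(r <- s) ('X - (iota r)%:P)).[y])) (lam + e *+ size s)].
Proof.
move=> hc; elim: s => [|a s [lam [H1 H2 H3]]].
  exists (vv c0); rewrite big_nil alg_polyC hornerC; split=> //.
    move=> j; rewrite coefC; case: eqP => [->|_]; last exact: LB0.
    by rewrite mulr0n subr0; apply: LB_vv.
  by rewrite mulr0n addr0; apply: og_refl.
have [m [m1 m2 m3]] := step_m a.
set p := c0 *: \prod_(r <- s) ('X - (iota r)%:P) in H1 H2 H3.
have -> : c0 *: \prod_(r <- a :: s) ('X - (iota r)%:P) = ('X - (iota a)%:P) * p.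
  by rewrite big_cons scalerAr.
exists (lam + m); split.
- move=> j; rewrite mulrBl coefB coefXM coefCM; apply: LB_sub.
    case: j => [|j] /=; first exact: LB0.
    exact: (LB_mono (le_step lam j m1) (H1 j)).
  have -> : lam + m - vv y *+ j = m + (lam - vv y *+ j) by rewrite addrCA addrA.
  exact: LB_mul.
- by rewrite hornerM hornerXsubC mulf_neq0 // notK_sub.
- rewrite hornerM hornerXsubC vvM ?notK_sub //.
  have -> : lam + m + e *+ (size (a :: s)) = (m + e) + (lam + e *+ size s).
    by rewrite /= mulrSr addrACA addrC.
  exact: le_add2.
Qed.
End GB.

Lemma emul_neq0 N : (0 < N)%N -> e *+ N != 0.
Proof.
move=> hN; apply/eqP => E.
apply: (not_le_mul he.1 he.2 hN); rewrite E mulr0n; apply: og_refl.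
Qed.

Lemma core (y : L) (Q : {poly {poly K}}) : notK y -> Q != 0 ->
  (map_poly (phi t) Q).[y] = 0 -> exists r, LB (y - iota r) (vv y + e).
Proof.
move=> hyK hQ hrel; apply: NNPP => hno.
have hst : forall r, le (vv (y - iota r)) (vv y + e).
  move=> r; case: (og_total O (vv y + e) (vv (y - iota r))) => // h.
  by exfalso; apply: hno; exists r; rewrite LBnz //; apply: notK_sub.
set N := size Q.
have hN : (0 < N)%N by rewrite /N size_poly_gt0.
set S := flatten [seq rts Q`_j | j <- seq.iota 0 N].
have [b hb] := best S N.
have hapx : forall j, (j < N)%N -> Q`_j != 0 ->
   iota (Q`_j).[b] != 0 /\
   LB (iota (Q`_j).[b] - phi t Q`_j) (vv (iota (Q`_j).[b]) + e *+ N).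
  move=> j hj hq.
  have hm : forall s, s \in rts Q`_j -> le (vv (t - iota s) + e *+ N) (vv (t - iota b)).
    move=> s hs; apply: hb; apply/flattenP; exists (rts Q`_j) => //.
    by apply/mapP; exists j => //; rewrite mem_iota.
  have [h1 h2] := approx_poly hq (le_muln N he.1) hm.
  have [h3 h4] := stable hv h1 h2 (le_muln N he.1) (emul_neq0 hN).
  by split=> //; rewrite h4 -opprB; apply: LB_opp.
set h := map_poly (fun q : {poly K} => q.[b]) Q.
have hcoef j : h`_j = (Q`_j).[b] by rewrite coef_map_id0 // horner0.
have hsz : (size h <= N)%N by apply: size_map_le.
have hh : h != 0.
  have hl : (N.-1 < N)%N by rewrite prednK.
  have hq : Q`_N.-1 != 0 by rewrite -lead_coefE lead_coef_eq0.
  have [hn _] := hapx _ hl hq.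
  by apply/eqP => E; move: hn; rewrite -hcoef E coef0 rmorph0 eqxx.
have hlh : iota (lead_coef h) != 0 by apply: iota_neq0; rewrite lead_coef_eq0.
have [lam [G1 G2 G3]] := Gbound hyK hst (rts h) hlh.
rewrite -map_rts in G1 G2 G3.
have hs : (size (rts h) < N)%N by move: hsz; rewrite size_rts.
have E3 : (map_poly iota h).[y] =
    \sum_(j < N) (iota h`_j - phi t Q`_j) * y ^+ j.
  have E2 : \sum_(j < N) phi t Q`_j * y ^+ j = 0.
    move: hrel; rewrite (horner_coef_wide _ (size_map_le _ _)) => hrel.
    rewrite -[RHS]hrel; apply: eq_bigr => j _; rewrite coef_map_id0 //.
    by rewrite /phi map_poly0 horner0.
  rewrite (horner_coef_wide _ (leq_trans (size_map_le _ _) hsz)).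
  rewrite -[LHS]subr0 -[X in _ - X]E2 -sumrB.
  by apply: eq_bigr => j _; rewrite mulrBl coef_map.
have LBs : LB (map_poly iota h).[y] (lam + e *+ N).
  rewrite E3; apply: LB_sum => j _.
  have [hq|hq] := eqVneq Q`_j 0.
    by rewrite hcoef hq horner0 rmorph0 /phi map_poly0 horner0 subrr mul0r; apply: LB0.
  have [hn hlb] := hapx j (ltn_ord j) hq.
  have hc := G1 j; rewrite coef_map /= hcoef LBnz // in hc.
  have hy : LB (y ^+ j) (vv y *+ j).
    have y0 : y != 0 by move: (hyK 0); rewrite rmorph0.
    by rewrite LBnz ?expf_neq0 // vvX //; apply: og_refl.
  have := LB_mul hlb hy; rewrite -hcoef.
  apply: LB_mono; rewrite hcoef.
  have -> : lam + e *+ N = lam - vv y *+ j + e *+ N + vv y *+ j.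
    by rewrite addrAC subrK.
  by apply: le_add2; [apply: le_addr' | apply: og_refl].
have := G3; rewrite LBnz // in LBs => G4.
have G5 := og_trans LBs G4.
apply: (not_le_mul he.1 he.2 hs).
by have := og_addl (- lam) G5; rewrite !addKr.
Qed.

Lemma core_aimp (x : L) (P : {poly {poly K}}) : notK x -> P != 0 ->
  (map_poly (phi t) P).[x] = 0 -> Aimp x e.
Proof.
move=> hx hP hrel b0.
set y := x - iota b0.
set Q := P \Po ('X + (b0%:P)%:P).
have hQ : Q != 0 by rewrite comp_poly2_eq0 // size_XaddC.
have cfu : commr_rmorph iota t by move=> a; rewrite /GRing.comm mulrC.
have Em : map_poly (phi t) =1 map_poly (horner_morph cfu) by apply: eq_map_poly.
have hrelQ : (map_poly (phi t) Q).[y] = 0.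
  rewrite Em map_comp_poly horner_comp rmorphD /= map_polyX map_polyC /=.
  rewrite hornerD hornerX hornerC horner_morphC /y subrK -Em; exact: hrel.
have [r hr] := core (notK_shift b0 hx) hQ hrelQ.
by exists (b0 + r); rewrite rmorphD opprD addrA.
Qed.
End Main.

Section Final.
Variables (K : closedFieldType) (L : fieldType) (iota : {rmorphism K -> L}).
Variables (G : zmodType) (O : ordered_abgroup G) (v : L -> option G).
Hypothesis hv : is_valuation O v.
Local Notation le := (og_le O).
Local Notation vv := (vv v).
Local Notation LB := (LB O v).
Local Notation E := (Eset iota v).
Local Notation T := (Tset iota v).

Lemma vS' (x : L) : x != 0 -> v x = Some (vv x). Proof. by move=> h; apply: (vS hv h). Qed.

Lemma eset_aimp x e : notK iota x -> E x e -> Aimp iota O v x e.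
Proof.
move=> hx [_ hT] b.
have hb : T x (v (x - iota b)) by exists b.
have [b' hb'] := (hT (oadd (Some e) (v (x - iota b)))).2 (ex_intro _ _ (conj hb erefl)).
move: hb'; rewrite (vS' (notK_sub b hx)) /= => hb'.
exists b'; apply: (LB_of (esym hb')); rewrite addrC; exact: og_refl.
Qed.

Lemma aimp_eset x e : notK iota x -> pos O e ->
  (exists a : K, a != 0 /\ v (iota a) = Some e) -> Aimp iota O v x e -> E x e.
Proof.
move=> hx [he0 he1] [a [ha hva]] hA; split; first by exists a.
have hia : iota a != 0 by rewrite fmorph_eq0.
have vva : vv (iota a) = e by apply: vv_of.
move=> g; split.
- move=> [b ->].
  have [b1 hb1] := hA b.
  set z0 := x - iota b; set z1 := x - iota b1.
  have z0n : z0 != 0 by apply: notK_sub.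
  have hw : iota (b1 - b) = z0 - z1 by rewrite rmorphB /z0 /z1; ring.
  have [wn wv] : iota (b1 - b) != 0 /\ vv (iota (b1 - b)) = vv z0.
    by apply: (stable hv z0n _ he0 he1); rewrite hw opprB addrC subrK.
  set u := - (iota (b1 - b) * iota a^-1).
  have un : u != 0 by rewrite oppr_eq0 mulf_neq0 // fmorph_eq0 invr_eq0.
  have uv : vv u = vv z0 - e.
    by rewrite /u fmorphV (vvN hv) (vvM hv) ?invr_eq0 // (vvV hv) // vva wv.
  have h1 : le (vv u) (vv z0) by rewrite uv -{2}(subrK e (vv z0)); apply: le_addpos.
  have h2 : vv u <> vv z0.
    rewrite uv => h; move: he1.
    have -> : e = 0 by apply: (addrI (vv z0)); rewrite -{1}h subrK addr0.
    by rewrite eqxx.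
  have [s1 s2] := strict hv un (LB_vv hv z0) h1 h2.
  exists (v (u + z0)); split.
    exists (b + (b1 - b) / a); rewrite /u /z0 !rmorphD !rmorphM !rmorphN /=.
    by congr v; ring.
  by rewrite (vS' z0n) (vS' s1) /= s2 uv addrC subrK.
- move=> [h [[b ->] ->]].
  have [b1 hb1] := hA b.
  set z0 := x - iota b; set z1 := x - iota b1.
  have z0n : z0 != 0 by apply: notK_sub.
  have z1n : z1 != 0 by apply: notK_sub.
  have hb1' := hb1; rewrite (LBnz hv) // in hb1'.
  case: (classic (vv z1 = vv z0 + e)) => hc.
    by exists b1; rewrite -/z1 (vS' z0n) (vS' z1n) hc addrC.
  have hw : iota (b1 - b) = z0 - z1 by rewrite rmorphB /z0 /z1; ring.
  have [wn wv] : iota (b1 - b) != 0 /\ vv (iota (b1 - b)) = vv z0.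
    by apply: (stable hv z0n _ he0 he1); rewrite hw opprB addrC subrK.
  set u := - (iota (b1 - b) * iota a).
  have un : u != 0 by rewrite oppr_eq0 mulf_neq0.
  have uv : vv u = vv z0 + e by rewrite /u (vvN hv) (vvM hv) // vva wv.
  have h2 : vv u <> vv z1 by rewrite uv => hh; apply: hc.
  have [s1 s2] := strict hv un (LB_vv hv z1) (ltac:(by rewrite uv)) h2.
  exists (b1 + (b1 - b) * a).
  rewrite (vS' z0n) /= addrC -uv -s2 -(vS' s1); congr v.
  by rewrite /u /z1 !rmorphD !rmorphM !rmorphN /=; ring.
Qed.

Lemma eset_neg x e : E x e -> E x (- e).
Proof.
move=> [[a [ha hva]] hT]; split.
  exists a^-1; split; first by rewrite invr_eq0.
  have hia : iota a != 0 by rewrite fmorph_eq0.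
  by rewrite fmorphV vS' ?invr_eq0 // (vvV hv) // (vv_of hva).
move=> g; split.
  move=> hg; have hg2 := (hT (oadd (Some e) g)).2 (ex_intro _ g (conj hg erefl)).
  exists (oadd (Some e) g); split=> //.
  by case: (g) => [gg|] //=; rewrite addKr.
move=> [h [hh ->]]; have [h' [hh' ->]] := (hT h).1 hh.
by case: (h') hh' => [gg|] //= ?; rewrite addKr.
Qed.

Lemma eset_zero x : E x 0.
Proof.
split; first by exists 1; rewrite oner_neq0 rmorph1 vS' ?oner_neq0 // (vv1 hv).
move=> g; split; first by move=> hg; exists g; split=> //; case: (g) => //= gg; rewrite add0r.
by move=> [h [hh ->]]; case: (h) hh => //= gg; rewrite add0r.
Qed.

Lemma trans_notK t : transcendental_over iota t -> notK iota t.
Proof.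
move=> ht b; have := ht ('X - b%:P) (negbT (polyXsubC_eq0 b)).
by rewrite map_polyXsubC hornerXsubC subr_eq0.
Qed.

Lemma swap_rel (t c : L) (P : {poly {poly K}}) :
  (map_poly (phi iota t) P).[c] = 0 -> (map_poly (phi iota c) (swapXY P)).[t] = 0.
Proof.
set P' := map_poly (map_poly iota) P.
have e1 z : map_poly (phi iota z) =1 map_poly (horner_eval z \o map_poly iota).
  by apply: eq_map_poly.
rewrite !e1 !map_poly_comp -/P' -swapXY_map -/P'.
by rewrite -horner_swapXY -horner_polyC horner2_swapXY.
Qed.


Lemma main_pos c d e : notK iota c -> notK iota d -> trdeg1 iota -> pos O e -> E c e -> E d e.
Proof.
move=> hc hd [t [htr halg]] he hEc.
have htK := trans_notK htr.
have hAc := eset_aimp hc hEc.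
have [P [hP hrel]] := halg c.
have hP' : swapXY P != 0 by rewrite swapXY_eq0.
have hAt : Aimp iota O v t e := core_aimp hv hc hAc he htK hP' (swap_rel hrel).
have [P2 [hP2 hrel2]] := halg d.
have hAd := core_aimp hv htK hAt he hd hP2 hrel2.
exact: aimp_eset hd he hEc.1 hAd.
Qed.

Lemma one_dir c d e : notK iota c -> notK iota d -> trdeg1 iota -> E c e -> E d e.
Proof.
move=> hc hd htr.
case: (classic (e = 0)) => [->|ne]; first by move=> *; apply: eset_zero.
case: (og_total O 0 e) => h.
  by apply: main_pos => //; split => //; apply/eqP.
have hp : pos O (- e).
  split; last by rewrite oppr_eq0; apply/eqP.
  by have := og_addl (- e) h; rewrite addNr addr0.
move=> hEc; rewrite -(opprK e); apply: eset_neg.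
exact: main_pos hc hd htr hp (eset_neg hEc).
Qed.
End Final.

Theorem lemma7p11 (K : closedFieldType) (L : fieldType) (iota : {rmorphism K -> L})
    (G : zmodType) (O : ordered_abgroup G) (v : L -> option G)
    (hv : is_valuation O v) (htr : trdeg1 iota)
    (c d : L) (hc : forall b : K, c != iota b) (hd : forall b : K, d != iota b) :
  forall e : G, Eset iota v c e <-> Eset iota v d e.
Proof.
by move=> e; split; apply: (one_dir hv).
Qed.
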